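(* Let $\mathcal{A},\mathcal{A}'$ be abelian categories with amplitudes $\alpha,\alpha'$, and let $F\colon\mathcal{A}\to\mathcal{A}'$ be an additive functor with $\alpha'(F(A))\le K\alpha(A)$ for all $A$, for some $K\ge0$, such that for every short exact sequence $0\to A\to B\to C\to0$ in $\mathcal{A}$: (1) if $\alpha(A)<\infty$, then $F(A)\to F(B)\to F(C)\to0$ is $\alpha'$-exact; (2) if $\alpha(C)<\infty$, then $0\to F(A)\to F(B)\to F(C)$ is $\alpha'$-exact. Then $F$ is $K$-Lipschitz with respect to the path metrics, i.e. $\mathrm{d}_{\alpha'}(F(A),F(B))\le K\,\mathrm{d}_\alpha(A,B)$ for all $A,B\in\operatorname{ob}\mathcal{A}$.
   Context: An amplitude on an abelian category $\mathcal{A}$ is a function $\alpha\colon\operatorname{ob}\mathcal{A}\to[0,\infty]$ with $\alpha(0)=0$ such that for every short exact sequence $0\to A\to B\to C\to0$, $\alpha(A)\le\alpha(B)$, $\alpha(C)\le\alpha(B)$ and $\alpha(B)\le\alpha(A)+\alpha(C)$. A sequence $\cdots\to A_k\to A_{k+1}\to\cdots$ in $\mathcal{A}'$ is $\alpha'$-exact if its homology at every position has amplitude $0$ under $\alpha'$. The path metric $\mathrm{d}_\alpha(A,B)$ is the infimum, over zigzags $A\xleftarrow{\gamma_1}C_1\xrightarrow{\gamma_2}\cdots\xrightarrow{\gamma_n}B$, of $\sum_i\alpha(\ker\gamma_i)+\alpha(\operatorname{coker}\gamma_i)$ ($\inf\emptyset=\infty$). *)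

(* Defs.v *)
From HB Require Import structures.
From mathcomp Require Import all_boot all_order all_algebra.
From mathcomp Require Import boolp classical_sets reals constructive_ereal ereal.
Set Implicit Arguments. Unset Strict Implicit. Unset Printing Implicit Defensive.
Import Order.TTheory GRing.Theory Num.Theory.
Local Open Scope ring_scope.

Record Cat := {
  ob :> Type;
  mor : ob -> ob -> zmodType;
  idm : forall A, mor A A;
  comp : forall A B C, mor B C -> mor A B -> mor A C;
  comp_idl : forall A B (f : mor A B), comp (idm B) f = f;
  comp_idr : forall A B (f : mor A B), comp f (idm A) = f;
  comp_assoc : forall A B C D (h : mor C D) (g : mor B C) (f : mor A B),
      comp h (comp g f) = comp (comp h g) f;
  comp_addl : forall A B C (g1 g2 : mor B C) (f : mor A B),
      comp (g1 + g2) f = comp g1 f + comp g2 f;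
  comp_addr : forall A B C (g : mor B C) (f1 f2 : mor A B),
      comp g (f1 + f2) = comp g f1 + comp g f2
}.

Arguments idm {c} A.
Arguments comp {c A B C}.

Section CatDefs.
Variable C : Cat.

Definition is_zero_obj (Z : C) : Prop := idm Z = 0.

Definition is_kernel (A B K : C) (f : mor A B) (k : mor K A) : Prop :=
  comp f k = 0 /\
  forall X (x : mor X A), comp f x = 0 ->
    exists u : mor X K, comp k u = x /\ forall v : mor X K, comp k v = x -> v = u.

Definition is_cokernel (A B Q : C) (f : mor A B) (q : mor B Q) : Prop :=
  comp q f = 0 /\
  forall X (x : mor B X), comp x f = 0 ->
    exists u : mor Q X, comp u q = x /\ forall v : mor Q X, comp v q = x -> v = u.

Definition is_mono (A B : C) (f : mor A B) : Prop :=
  forall X (x y : mor X A), comp f x = comp f y -> x = y.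
Definition is_epi (A B : C) (f : mor A B) : Prop :=
  forall X (x y : mor B X), comp x f = comp y f -> x = y.

Definition is_biproduct (A B P : C) (i1 : mor A P) (i2 : mor B P)
    (p1 : mor P A) (p2 : mor P B) : Prop :=
  [/\ comp p1 i1 = idm A, comp p2 i2 = idm B, comp p1 i2 = 0, comp p2 i1 = 0
    & comp i1 p1 + comp i2 p2 = idm P].

Definition is_abelian : Prop :=
  (exists Z : C, is_zero_obj Z) /\
  [/\ (forall A B : C, exists P (i1 : mor A P) (i2 : mor B P) p1 p2,
           is_biproduct i1 i2 p1 p2),
      (forall (A B : C) (f : mor A B), exists K (k : mor K A), is_kernel f k),
      (forall (A B : C) (f : mor A B), exists Q (q : mor B Q), is_cokernel f q),
      (forall (A B : C) (f : mor A B), is_mono f ->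
          exists D (g : mor B D), is_kernel g f)
    & (forall (A B : C) (f : mor A B), is_epi f ->
          exists D (g : mor D A), is_cokernel g f)].

Definition short_exact (A B C' : C) (f : mor A B) (g : mor B C') : Prop :=
  is_kernel g f /\ is_cokernel f g.

(* H is a homology object of A -f-> B -g-> C' at B (requires g \o f = 0):
   H = coker (A -> ker g), the map A -> ker g being the factorization of f. *)
Definition is_homology (A B C' : C) (f : mor A B) (g : mor B C') (H : C) : Prop :=
  comp g f = 0 /\
  exists K (k : mor K B) (f' : mor A K) (c : mor K H),
    [/\ is_kernel g k, comp k f' = f & is_cokernel f' c].

End CatDefs.

Section Amplitude.
Variable R : realType.
Local Open Scope ereal_scope.

Definition is_amplitude (C : Cat) (alpha : C -> \bar R) : Prop :=
  [/\ (forall A, 0 <= alpha A),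
      (forall Z : C, is_zero_obj Z -> alpha Z = 0)
    & (forall (A B D : C) (f : mor A B) (g : mor B D), short_exact f g ->
        [/\ alpha A <= alpha B, alpha D <= alpha B
          & alpha B <= alpha A + alpha D])].

Definition exact_at (C : Cat) (alpha : C -> \bar R) (A B D : C)
    (f : mor A B) (g : mor B D) : Prop :=
  exists H : C, is_homology f g H /\ alpha H = 0.
(* homology at A of 0 -> A -f-> B is ker f *)
Definition exact_left_end (C : Cat) (alpha : C -> \bar R) (A B : C)
    (f : mor A B) : Prop :=
  exists K (k : mor K A), is_kernel f k /\ alpha K = 0.
(* homology at B of A -f-> B -> 0 is coker f *)
Definition exact_right_end (C : Cat) (alpha : C -> \bar R) (A B : C)
    (f : mor A B) : Prop :=
  exists Q (q : mor B Q), is_cokernel f q /\ alpha Q = 0.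

(* zigzag_cost A B c : there is a zigzag from A to B (arrows in either
   direction) whose cost sum_i alpha(ker g_i) + alpha(coker g_i) is c *)
Inductive zigzag_cost (C : Cat) (alpha : C -> \bar R) (A : C) : C -> \bar R -> Prop :=
  | zz_nil : zigzag_cost alpha A A 0
  | zz_fwd (X Y K Q : C) (g : mor X Y) (k : mor K X) (q : mor Y Q) c :
      zigzag_cost alpha A X c -> is_kernel g k -> is_cokernel g q ->
      zigzag_cost alpha A Y (c + (alpha K + alpha Q))
  | zz_bwd (X Y K Q : C) (g : mor Y X) (k : mor K Y) (q : mor X Q) c :
      zigzag_cost alpha A X c -> is_kernel g k -> is_cokernel g q ->
      zigzag_cost alpha A Y (c + (alpha K + alpha Q)).

Definition path_metric (C : Cat) (alpha : C -> \bar R) (A B : C) : \bar R :=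
  ereal_inf [set c | zigzag_cost alpha A B c].

End Amplitude.

Record Functor (C D : Cat) := {
  fob :> C -> D;
  Fmor : forall A B : C, mor A B -> mor (fob A) (fob B);
  Fmor_id : forall A, Fmor (idm A) = idm (fob A);
  Fmor_comp : forall A B E (g : mor B E) (f : mor A B),
      Fmor (comp g f) = comp (Fmor g) (Fmor f)
}.
Arguments Fmor {C D} f {A B} : rename.

Definition is_additive (C D : Cat) (F : Functor C D) : Prop :=
  forall A B (f g : mor A B), Fmor F (f + g) = Fmor F f + Fmor F g.

(* Main.v *)
Require Import Defs.
From HB Require Import structures.
From mathcomp Require Import all_boot all_order all_algebra.
From mathcomp Require Import boolp classical_sets reals constructive_ereal ereal.
Import Order.TTheory GRing.Theory Num.Theory.
Set Implicit Arguments. Unset Strict Implicit.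
Local Open Scope ring_scope.

Local Notation cmp := Defs.comp.
Section Abel.
Variable Cc : Cat.

Lemma comp0l (A B D : Cc) (f : mor A B) : cmp (0 : mor B D) f = 0.
Proof. apply: (addrI (cmp 0 f)); by rewrite -comp_addl !addr0. Qed.

Lemma comp0r (A B D : Cc) (g : mor B D) : cmp g (0 : mor A B) = 0.
Proof. apply: (addrI (cmp g 0)); by rewrite -comp_addr !addr0. Qed.

Lemma comp_subl (A B D : Cc) (g1 g2 : mor B D) (f : mor A B) :
  cmp (g1 - g2) f = cmp g1 f - cmp g2 f.
Proof. by apply/eqP; rewrite eq_sym subr_eq -comp_addl subrK. Qed.

Lemma comp_subr (A B D : Cc) (g : mor B D) (f1 f2 : mor A B) :
  cmp g (f1 - f2) = cmp g f1 - cmp g f2.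
Proof. by apply/eqP; rewrite eq_sym subr_eq -comp_addr subrK. Qed.

Lemma kernel_mono (A B K : Cc) (f : mor A B) (k : mor K A) :
  is_kernel f k -> is_mono k.
Proof.
move=> [fk0 H] X x y e.
have h : cmp f (cmp k x) = 0 by rewrite comp_assoc fk0 comp0l.
have [u [_ uu]] := H X _ h.
by rewrite (uu x erefl) (uu y (esym e)).
Qed.

Lemma coker_epi (A B Q : Cc) (f : mor A B) (q : mor B Q) :
  is_cokernel f q -> is_epi q.
Proof.
move=> [qf0 H] X x y e.
have h : cmp (cmp x q) f = 0 by rewrite -comp_assoc qf0 comp0r.
have [u [_ uu]] := H X _ h.
by rewrite (uu x erefl) (uu y (esym e)).
Qed.

Lemma mono0 (A B : Cc) (f : mor A B) : is_mono f ->
  forall X (x : mor X A), cmp f x = 0 -> x = 0.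
Proof. by move=> mf X x e; apply: mf; rewrite e comp0r. Qed.

Lemma epi0P (A B : Cc) (f : mor A B) :
  (forall X (x : mor B X), cmp x f = 0 -> x = 0) -> is_epi f.
Proof.
move=> H X x y e; apply/eqP; rewrite -subr_eq0; apply/eqP; apply: H.
by rewrite comp_subl e subrr.
Qed.

Lemma mono_comp (A B D : Cc) (g : mor B D) (f : mor A B) :
  is_mono g -> is_mono f -> is_mono (cmp g f).
Proof. by move=> mg mf X x y; rewrite -!comp_assoc => /mg /mf. Qed.

Lemma zero_to (Z X : Cc) : is_zero_obj Z -> forall v : mor X Z, v = 0.
Proof. by move=> hZ v; rewrite -(comp_idl v) hZ comp0l. Qed.

Lemma zero_from (Z X : Cc) : is_zero_obj Z -> forall v : mor Z X, v = 0.
Proof. by move=> hZ v; rewrite -(comp_idr v) hZ comp0r. Qed.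

Lemma mono_ker_zero (A B Z : Cc) (g : mor A B) :
  is_mono g -> is_zero_obj Z -> is_kernel g (0 : mor Z A).
Proof.
move=> mg hZ; split; first by rewrite comp0r.
move=> X x e; exists 0; split.
  by rewrite comp0r (mono0 mg e).
by move=> v _; apply: zero_to.
Qed.

Lemma zero_ker_coker (A B : Cc) :
  is_kernel (0 : mor A B) (idm A) /\ is_cokernel (0 : mor A B) (idm B).
Proof.
split; split; rewrite ?comp0l ?comp0r //.
  move=> X x _; exists x; split; first by rewrite comp_idl.
  by move=> v; rewrite comp_idl.
move=> X x _; exists x; split; first by rewrite comp_idr.
by move=> v; rewrite comp_idr.
Qed.

Hypothesis HC : is_abelian Cc.

Lemma image_fact (A B Kk Q : Cc) (f : mor A B) (k : mor Kk A) (q : mor B Q) :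
  is_kernel f k -> is_cokernel f q ->
  exists I (e : mor A I) (m : mor I B),
    [/\ cmp m e = f, short_exact k e & short_exact m q].
Proof.
case: HC => _ [_ hker _ hmono hepi] kk qq.
have [I [m km]] := hker _ _ q.
have mm := kernel_mono km.
have [qm0 kmH] := km.
have [qf0 qH] := qq.
have [kf0 kH] := kk.
have [e [me _]] := kmH _ f qf0.
have cokmq : is_cokernel m q.
  split=> // X x xm0.
  have [D [g cg]] := hepi _ _ q (coker_epi qq).
  have [qg0 cgH] := cg.
  have [u [mu _]] := kmH _ g qg0.
  apply: cgH; by rewrite -mu comp_assoc xm0 comp0l.
have ek0 : cmp e k = 0.
  by apply: (mono0 mm); rewrite comp_assoc me.
have kerek : is_kernel e k.
  split=> // X x ex0; apply: kH; by rewrite -me -comp_assoc ex0 comp0r.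
have epie : is_epi e.
  apply: epi0P => T t te0.
  have [J [j kj]] := hker _ _ t.
  have [tj0 kjH] := kj.
  have [e' [je' _]] := kjH _ e te0.
  have mmj := mono_comp mm (kernel_mono kj).
  have [W [h khmj]] := hmono _ _ _ mmj.
  have [hmj0 khH] := khmj.
  have hf0 : cmp h f = 0.
    by rewrite -me -je' (comp_assoc m j e') comp_assoc hmj0 comp0l.
  have [h' [h'q _]] := qH _ h hf0.
  have hm0 : cmp h m = 0 by rewrite -h'q -comp_assoc qm0 comp0r.
  have [v [mjv _]] := khH _ m hm0.
  have jv : cmp j v = idm I.
    apply: mm; by rewrite comp_idr comp_assoc.
  by rewrite -(comp_idr t) -jv comp_assoc tj0 comp0l.
have cokke : is_cokernel k e.
  split=> // X x xk0.
  have [D [g cg]] := hepi _ _ e epie.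
  have [eg0 cgH] := cg.
  have fg0 : cmp f g = 0 by rewrite -me -comp_assoc eg0 comp0r.
  have [u [ku _]] := kH _ g fg0.
  apply: cgH; by rewrite -ku comp_assoc xk0 comp0l.
by exists I, e, m; split.
Qed.

End Abel.

Local Open Scope ereal_scope.

Section Amp.
Variables (R : realType) (Cc : Cat) (al : Cc -> \bar R).
Hypotheses (HC : is_abelian Cc) (Ha : is_amplitude al).

Lemma coker_bound (A B Q : Cc) (f : mor A B) (q : mor B Q) :
  is_cokernel f q -> al B <= al A + al Q.
Proof.
move=> cq.
have [_ [_ hker _ _ _]] := HC.
have [Kk [k kk]] := hker _ _ f.
have [I [e [m [_ sek sem]]]] := image_fact HC kk cq.
have [_ _ Hs] := Ha.
have [_ h1 _] := Hs _ _ _ _ _ sek.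
have [_ _ h2] := Hs _ _ _ _ _ sem.
apply: (le_trans h2); exact: leeD.
Qed.

Lemma zz_ge0 (A B : Cc) c : zigzag_cost al A B c -> 0 <= c.
Proof.
have [H0 _ _] := Ha.
elim=> //= *; by rewrite adde_ge0 // adde_ge0.
Qed.

End Amp.

Section Main.
Variables (R : realType) (C C' : Cat) (al : C -> \bar R) (al' : C' -> \bar R)
  (F : Functor C C') (K : R).
Hypotheses (HC : is_abelian C) (HC' : is_abelian C')
  (Ha : is_amplitude al) (Ha' : is_amplitude al') (HK : (0 <= K)%R)
  (HFK : forall A : C, al' (F A) <= K%:E * al A)
  (H1 : forall (A B D : C) (f : mor A B) (g : mor B D), short_exact f g ->
     al A < +oo ->
     exact_at al' (Fmor F f) (Fmor F g) /\ exact_right_end al' (Fmor F g))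
  (H2 : forall (A B D : C) (f : mor A B) (g : mor B D), short_exact f g ->
     al D < +oo ->
     exact_left_end al' (Fmor F f) /\ exact_at al' (Fmor F f) (Fmor F g)).

Lemma step3 (X Y Kr Q : C) (g : mor X Y) (k : mor Kr X) (q : mor Y Q) :
  is_kernel g k -> is_cokernel g q -> al Kr < +oo -> al Q < +oo ->
  exists (P1 P2 : C') (g1 : mor (F X) P1) (g2 : mor P1 P2) (g3 : mor P2 (F Y))
    (K1 K2 K3 Q1 Q2 Q3 : C') (k1 : mor K1 (F X)) (k2 : mor K2 P1) (k3 : mor K3 P2)
    (q1 : mor P1 Q1) (q2 : mor P2 Q2) (q3 : mor (F Y) Q3),
    [/\ is_kernel g1 k1 /\ is_cokernel g1 q1,
        is_kernel g2 k2 /\ is_cokernel g2 q2,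
        is_kernel g3 k3 /\ is_cokernel g3 q3
      & [/\ al' K1 + al' Q1 <= K%:E * al Kr,
        al' K2 + al' Q2 <= 0
      & al' K3 + al' Q3 <= K%:E * al Q]].
Proof.
move=> kk qq aKr aQ.
have [I [e [m [me sek sem]]]] := image_fact HC kk qq.
have [[H [[_ [K0 [k0 [f' [c [kk0 k0f' cf']]]]]] aH]] [Q0 [q0 [cq0 aQ0]]]] :=
  H1 sek aKr.
have [[K1 [k1 [kk1 aK1]]] [H2' [[_ [K2 [k2 [f2 [c2 [kk2 k2f2 cf2]]]]]] aH2]]] :=
  H2 sem aQ.
have mk2 := kernel_mono kk2.
have kf2 : is_kernel f2 k1.
  have [fk1 kk1H] := kk1.
  split; first by apply: (mono0 mk2); rewrite comp_assoc k2f2.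
  move=> X' x ex; apply: kk1H; by rewrite -k2f2 -comp_assoc ex comp0r.
have [[Z hZ] [_ hker hcok _ _]] := HC'.
have kz := mono_ker_zero mk2 hZ.
have [Q3 [q3 cq3]] := hcok _ _ (Fmor F q).
have [I3 [e3 [m3 [_ [_ cke3] sem3]]]] := image_fact HC' kk2 cq3.
have [_ Z0 Hs'] := Ha'.
have [aI3 _ _] := Hs' _ _ _ _ _ sem3.
exists _, _, (Fmor F e), f2, k2, _, _, _, _, _, _, k0, k1, (0%R : mor Z K2), q0, c2, e3.
split=> //; split.
- rewrite aQ0 adde0; apply: (le_trans (coker_bound HC' Ha' cf')).
  by rewrite aH adde0.
- by rewrite aK1 aH2 adde0.
- rewrite (Z0 _ hZ) add0e; exact: (le_trans aI3).
Qed.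


Lemma ge0_nNy (x : \bar R) : 0 <= x -> x != -oo.
Proof. by case: x. Qed.

Lemma sum_bound1 (d Kc s1 s2 s3 t1 t3 : \bar R) :
  d <= Kc -> s1 <= t1 -> s2 <= 0 -> s3 <= t3 ->
  d + s1 + s2 + s3 <= Kc + (t1 + t3).
Proof.
move=> a b c e; rewrite addeA -(adde0 (Kc + t1)).
by apply: leeD => //; apply: leeD => //; apply: leeD.
Qed.

Lemma sum_bound2 (d Kc s1 s2 s3 t1 t3 : \bar R) :
  d <= Kc -> s1 <= t1 -> s2 <= 0 -> s3 <= t3 ->
  d + s3 + s2 + s1 <= Kc + (t1 + t3).
Proof.
move=> a b c e; rewrite (addeC t1) addeA -(adde0 (Kc + t3)).
by apply: leeD => //; apply: leeD => //; apply: leeD.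
Qed.

Lemma inf_case (Kq Q : C) c :
  (0 < K)%R -> 0 <= c -> ~~ ((al Kq < +oo) && (al Q < +oo)) ->
  K%:E * c + K%:E * (al Kq + al Q) = +oo.
Proof.
move=> hK c0 fin.
have [H0 _ _] := Ha.
have -> : al Kq + al Q = +oo.
  move: fin; rewrite !ltey negb_and !negbK => /orP [/eqP -> | /eqP ->].
    by rewrite addye // ge0_nNy.
  by rewrite addey // ge0_nNy.
rewrite gt0_muley ?lte_fin // addey // ge0_nNy // mule_ge0 // lee_fin ltW //.
Qed.

Lemma zz_map (hK : (0 < K)%R) (A B : C) c :
  zigzag_cost al A B c -> exists d, zigzag_cost al' (F A) (F B) d /\ d <= K%:E * c.
Proof.
have [H0 _ _] := Ha.
have [_ [_ hker hcok _ _]] := HC'.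
elim=> [| X Y Kq Q g k q c1 zc [d [zd dle]] kk qq
        | X Y Kq Q g k q c1 zc [d [zd dle]] kk qq].
- by exists 0; split; [exact: zz_nil | rewrite mule0].
- have c0 := zz_ge0 Ha zc.
  rewrite ge0_muleDr // ?adde_ge0 //.
  case: (boolP ((al Kq < +oo) && (al Q < +oo))) => [/andP [aK aQ] | fin].
  + have [P1 [P2 [g1 [g2 [g3 [K1 [K2 [K3 [Q1 [Q2 [Q3 [k1 [k2 [k3 [q1 [q2 [q3
      [[kk1 cq1] [kk2 cq2] [kk3 cq3] [b1 b2 b3]]]]]]]]]]]]]]]]]]] := step3 kk qq aK aQ.
    exists (d + (al' K1 + al' Q1) + (al' K2 + al' Q2) + (al' K3 + al' Q3)); split.
      apply: zz_fwd kk3 cq3; apply: zz_fwd kk2 cq2; exact: zz_fwd zd kk1 cq1.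
    rewrite ge0_muleDr //; exact: sum_bound1.
  + rewrite inf_case // ?leey //.
    have [K' [k' kk']] := hker _ _ (Fmor F g).
    have [Q' [q' cq']] := hcok _ _ (Fmor F g).
    exists (d + (al' K' + al' Q')); split; [exact: zz_fwd zd kk' cq' | exact: leey].
- have c0 := zz_ge0 Ha zc.
  rewrite ge0_muleDr // ?adde_ge0 //.
  case: (boolP ((al Kq < +oo) && (al Q < +oo))) => [/andP [aK aQ] | fin].
  + have [P1 [P2 [g1 [g2 [g3 [K1 [K2 [K3 [Q1 [Q2 [Q3 [k1 [k2 [k3 [q1 [q2 [q3
      [[kk1 cq1] [kk2 cq2] [kk3 cq3] [b1 b2 b3]]]]]]]]]]]]]]]]]]] := step3 kk qq aK aQ.
    exists (d + (al' K3 + al' Q3) + (al' K2 + al' Q2) + (al' K1 + al' Q1)); split.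
      apply: zz_bwd kk1 cq1; apply: zz_bwd kk2 cq2; exact: zz_bwd zd kk3 cq3.
    rewrite ge0_muleDr //; exact: sum_bound2.
  + rewrite inf_case //.
    have [K' [k' kk']] := hker _ _ (Fmor F g).
    have [Q' [q' cq']] := hcok _ _ (Fmor F g).
    exists (d + (al' K' + al' Q')); split; [exact: zz_bwd zd kk' cq' | exact: leey].
Qed.

End Main.

Theorem mainTheorem12 (R : realType) (C C' : Cat)
  (alpha : C -> \bar R) (alpha' : C' -> \bar R) (F : Functor C C') (K : R) :
  is_abelian C -> is_abelian C' ->
  is_amplitude alpha -> is_amplitude alpha' ->
  is_additive F ->
  (0 <= K)%R ->
  (forall A : C, alpha' (F A) <= K%:E * alpha A) ->
  (forall (A B D : C) (f : mor A B) (g : mor B D), short_exact f g ->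
     alpha A < +oo ->
     exact_at alpha' (Fmor F f) (Fmor F g) /\ exact_right_end alpha' (Fmor F g)) ->
  (forall (A B D : C) (f : mor A B) (g : mor B D), short_exact f g ->
     alpha D < +oo ->
     exact_left_end alpha' (Fmor F f) /\ exact_at alpha' (Fmor F f) (Fmor F g)) ->
  forall A B : C,
    path_metric alpha' (F A) (F B) <= K%:E * path_metric alpha A B.
Proof.
move=> HC HC' Ha Ha' _ HK HFK H1 H2 A B.
rewrite le_eqVlt eq_sym in HK; case/orP: HK => [/eqP K0 | hK].
  rewrite K0 mul0e.
  have [zk zc] := zero_ker_coker (F A) (F B).
  apply: ge_ereal_inf; exists (0 + (alpha' (F A) + alpha' (F B))).
    exact: (zz_fwd (zz_nil alpha' (F A)) zk zc).
  rewrite add0e -(adde0 0); apply: leeD; by apply: (le_trans (HFK _)); rewrite K0 mul0e.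
rewrite /path_metric -ereal_inf_pZl //; apply/ereal_infP => _ [c zc <-].
have [d [zd dle]] := zz_map HC HC' Ha Ha' (ltW hK) HFK H1 H2 hK zc.
apply: ge_ereal_inf; by exists d.
Qed.
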